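(* For every integer $k\ge 2$ and every $n\ge 0$, the number of edges of the $k$-Pell graph $\Pi_{n,k}$ is $$|E(\Pi_{n,k})|=\sum_{i=0}^{n}F_{i,k}\left(F_{n-i+2,k}-F_{n-i+1,k}\right).$$
   Context: For a positive integer $k$, the $k$-Fibonacci numbers are defined by $F_{0,k}=0$, $F_{1,k}=1$ and $F_{n,k}=kF_{n-1,k}+F_{n-2,k}$ for $n\ge 2$. For an integer $k\ge 2$, a $k$-Pell string is a finite word over the alphabet $\{0,1,\ldots,k-1,kk\}$, i.e. a word over $\{0,1,\ldots,k\}$ in which every maximal run of the letter $k$ has even length. For $n\ge 0$, the $k$-Pell graph $\Pi_{n,k}$ has as vertices all $k$-Pell strings of length $n$, and two vertices are adjacent if one is obtained from the other either by replacing a single letter $i$ by $i+1$ (or vice versa) for some $i\in\{0,1,\ldots,k-2\}$, or by replacing one factor $(k-1)(k-1)$ by $kk$ (or vice versa), in such a way that the resulting string is again a $k$-Pell string. *)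

(* Defs.v *)
From mathcomp Require Import all_boot.
Set Implicit Arguments. Unset Strict Implicit. Unset Printing Implicit Defensive.

Fixpoint kfib (k n : nat) : nat :=
  match n with
  | 0 => 0
  | 1 => 1
  | (n'.+1) as m => k * kfib k n' + (if n' is n''.+1 then kfib k n'' else 0)
  end.

(* A word over {0,...,k} is a k-Pell string iff it is a concatenation of
   letters 0,...,k-1 and the two-letter block kk. *)
Fixpoint is_pell (k : nat) (s : seq nat) : bool :=
  match s with
  | [::] => true
  | x :: s' =>
      if x < k then is_pell k s'
      else if x == k then
        (match s' with
         | y :: s'' => (y == k) && is_pell k s''
         | [::] => false
         end)
      else false
  end.

Definition letter_move (k : nat) (s t : seq nat) : bool :=
  (size s == size t) &&
  [exists i : 'I_(size s),
     [&& [forall j : 'I_(size s), (j != i) ==> (nth 0 s j == nth 0 t j)],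
         (nth 0 s i < k) , (nth 0 t i < k) &
         ((nth 0 s i == (nth 0 t i).+1) || (nth 0 t i == (nth 0 s i).+1))]].

Definition block_move1 (k : nat) (s t : seq nat) : bool :=
  (size s == size t) &&
  [exists i : 'I_(size s),
     [&& i.+1 < size s,
         [forall j : 'I_(size s),
            ((j != i) && (j != i.+1 :> nat)) ==> (nth 0 s j == nth 0 t j)],
         nth 0 s i == k.-1, nth 0 s i.+1 == k.-1,
         nth 0 t i == k & nth 0 t i.+1 == k]].

Definition pell_adj (k : nat) (s t : seq nat) : bool :=
  [&& is_pell k s, is_pell k t &
     [|| letter_move k s t, block_move1 k s t | block_move1 k t s]].

Definition pell_word (k n : nat) (w : n.-tuple 'I_k.+1) : seq nat :=
  map (@nat_of_ord _) w.

Definition pell_vertices (k n : nat) : {set n.-tuple 'I_k.+1} :=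
  [set w | is_pell k (pell_word w)].

Definition pell_edges (k n : nat) : {set {set n.-tuple 'I_k.+1}} :=
  [set [set x; y] | x in pell_vertices k n, y in pell_vertices k n
                  & pell_adj k (pell_word x) (pell_word y)].

(* Main.v *)
Require Import Defs.
From mathcomp Require Import all_boot zify.
Set Implicit Arguments. Unset Strict Implicit. Unset Printing Implicit Defensive.

Section Words.
Variable k : nat.
Hypothesis k1 : 0 < k.

Definition blk (s t : seq nat) : bool :=
  match s, t with
  | c :: r, d :: r' => [&& c == k.-1, d == k & r == r']
  | _, _ => false
  end.

Fixpoint lup (s t : seq nat) : bool :=
  match s, t with
  | a :: s', b :: t' => ((a == b) && lup s' t') || [&& b == a.+1, b < k & s' == t']
  | _, _ => false
  end.

Fixpoint bm (s t : seq nat) : bool :=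
  match s, t with
  | a :: s', b :: t' => ((a == b) && bm s' t') || [&& a == k.-1, b == k & blk s' t']
  | _, _ => false
  end.

Definition up s t := lup s t || bm s t.

Lemma up_nil t : up [::] t = false. Proof. by case: t. Qed.
Lemma up_nilr s : up s [::] = false. Proof. by case: s. Qed.
Lemma up_cons a b s t : up (a :: s) (b :: t) =
  ((a == b) && up s t) || [&& b == a.+1, b < k & s == t] || [&& a == k.-1, b == k & blk s t].
Proof.
rewrite /up /=; case: (a == b); case: (lup s t); case: (bm s t);
case: [&& b == a.+1, b < k & s == t]; case: [&& a == k.-1, b == k & blk s t]; by [].
Qed.

Lemma up_size s t : up s t -> size s = size t.
Proof.
elim: s t => [|a s IH] [|b t] //; rewrite up_cons /=.
case/orP => [/orP[/andP[_ /IH -> //]| /and3P[_ _ /eqP -> //]]|/and3P[_ _]].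
by case: s {IH} => [|c s] //; case: t => [|d t] // /and3P[_ _ /eqP ->].
Qed.

Lemma up_sum s t : up s t -> sumn s < sumn t.
Proof.
elim: s t => [|a s IH] [|b t] //; rewrite up_cons /=.
case/orP => [/orP[/andP[/eqP -> /IH]| /and3P[/eqP -> _ /eqP ->]]|/and3P[/eqP -> /eqP ->]].
- by rewrite ltn_add2l.
- by rewrite ltn_add2r.
case: s {IH} => [|c s] //; case: t => [|d t] // /and3P[/eqP -> /eqP -> /eqP ->] /=.
rewrite !addnA ltn_add2r; case: k k1 => // k' _ /=; lia.
Qed.

Lemma up_irr s : up s s = false.
Proof. by apply/negP => /up_sum; rewrite ltnn. Qed.
Lemma up_asym s t : up s t -> up t s = false.
Proof. move=> /up_sum h; apply/negP => /up_sum; lia. Qed.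

Lemma is_pell_cons2 a b s : a < k -> b < k -> is_pell k (a :: b :: s) = is_pell k s.
Proof. by move=> ha hb /=; rewrite ha hb. Qed.

Lemma up_pell s t : up s t -> is_pell k s -> is_pell k t.
Proof.
move: {2}(size s) (leqnn (size s)) => n; elim: n s t => [|n IH] s t.
  by case: s => // _; rewrite up_nil.
case: s => [|a s]; first by rewrite up_nil.
case: t => [|b t]; first by rewrite up_nilr.
rewrite ltnS => hs; rewrite up_cons.
case/orP => [/orP[/andP[/eqP <- hst]| /and3P[/eqP -> hb /eqP <-]]|/and3P[/eqP -> /eqP -> hbl]].
- rewrite /=; case: (ltnP a k) => hk.
    exact: (IH s t hs hst).
  have [ea|ne] := eqVneq a k; last by [].
  subst a.
  case: s hs hst => [|c s] //= hs; case: t => [|d t]; first by rewrite up_nilr.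
  rewrite up_cons => hst /andP[/eqP hc hp].
  move: hst; rewrite hc.
  case/orP => [/orP[/andP[/eqP <- h]| /and3P[/eqP -> hh hh2]]| /and3P[hh hh2 hh3]].
  - by rewrite eqxx /=; apply: (IH s t _ h hp); exact: ltnW hs.
  - by move: hh; rewrite ltnNge leqnSn.
  - by move/eqP: hh => e; move: (ltn_predL k); rewrite -{1}e ltnn k1.
- by rewrite /= hb (ltnW hb).
- case: s hs hbl => [|c s] //; case: t => [|d t] // _ /and3P[/eqP -> /eqP -> /eqP <-].
  rewrite is_pell_cons2 ?ltn_predL // => hp.
  by rewrite /= ltnn eqxx hp.
Qed.

Fixpoint ups (s : seq nat) : seq (seq nat) :=
  match s with
  | [::] => [::]
  | a :: s' => [seq a :: t | t <- ups s'] ++ (if a.+1 < k then [:: a.+1 :: s'] else [::])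
      ++ (if s' is c :: r then (if (a == k.-1) && (c == k.-1) then [:: k :: k :: r] else [::]) else [::])
  end.

Lemma mem_cons_map a (L : seq (seq nat)) x :
  (x \in [seq a :: t | t <- L]) = (if x is b :: t then (b == a) && (t \in L) else false).
Proof.
apply/mapP/idP => [[t tL ->]|]; first by rewrite eqxx.
by case: x => // b t /andP[/eqP -> tL]; exists t.
Qed.

Lemma mem_ups s t : (t \in ups s) = up s t.
Proof.
elim: s t => [|a s IH] [|b t] //=.
- by rewrite !mem_cat mem_cons_map; case: ifP; case: s {IH} => [|c r] //; case: ifP.
rewrite !mem_cat mem_cons_map IH up_cons eq_sym.
rewrite -orbA; congr (_ || (_ || _)).
- case: ifP => h; rewrite ?inE ?in_nil.
  + by rewrite eqseq_cons; case: eqP => //= ->; rewrite h eq_sym.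
  + by case: eqP => //= ->; rewrite h.
- case: s {IH} => [|c r]; first by rewrite /= !andbF.
  case: ifP => /= h; rewrite ?inE ?in_nil.
  + case/andP: h => /eqP -> /eqP ->; rewrite !eqxx /=.
    case: t => [|d t] //=; rewrite eqseq_cons eqseq_cons eq_sym; congr (_ && _).
    by rewrite (eq_sym t).
  + case: t => [|d t]; rewrite ?andbF //=.
    apply/esym/negP => /and4P[/eqP ha hb hc _]; move: h; by rewrite ha hc eqxx.
Qed.
Lemma uniq_ups s : uniq (ups s).
Proof.
elim: s => [|a s IH] //=.
rewrite !cat_uniq map_inj_uniq ?IH //; last by move=> x y [].
apply/and3P; split => //.
- apply/hasPn => x; rewrite mem_cat mem_cons_map.
  case/orP; first by case: ifP => // _; rewrite inE => /eqP -> /=; rewrite (gtn_eqF (ltnSn a)).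
  case: s {IH} => [|c r] //; case: ifP => // /andP[/eqP -> _]; rewrite inE => /eqP -> /=.
  have kp : k.-1 < k by rewrite ltn_predL. by rewrite (gtn_eqF kp).
- case: ifP => h; case: s {IH} => [|c r] //=; case: ifP => //= /andP[/eqP e _]; by move: h; rewrite e (prednK k1) ltnn.
Qed.
End Words.

Section Moves.
Variable k : nat.
Hypothesis k1 : 0 < k.

Definition lcond (x y : nat) := [&& x < k, y < k & (x == y.+1) || (y == x.+1)].

Definition lmv (s t : seq nat) :=
  (size s == size t) &&
  has (fun i => all (fun j => (j != i) ==> (nth 0 s j == nth 0 t j)) (iota 0 (size s))
                && lcond (nth 0 s i) (nth 0 t i)) (iota 0 (size s)).

Lemma letter_moveE s t : letter_move k s t = lmv s t.
Proof.
rewrite /letter_move /lmv; case: eqP => //= _.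
apply/existsP/hasP => [[i /and4P[/forallP H a b c]]|[i]].
  exists (val i); first by rewrite mem_iota /=.
  rewrite /lcond a b c !andbT; apply/allP => j; rewrite mem_iota => /andP[_ lj].
  exact: (H (Ordinal lj)).
rewrite mem_iota /= => li /andP[/allP H /and3P[a b c]].
exists (Ordinal li); rewrite /= a b c !andbT; apply/forallP => j.
by have := H (val j); rewrite mem_iota /=; apply.
Qed.

Definition bmv (s t : seq nat) :=
  (size s == size t) &&
  has (fun i => [&& i.+1 < size s,
     all (fun j => ((j != i) && (j != i.+1)) ==> (nth 0 s j == nth 0 t j)) (iota 0 (size s)),
     nth 0 s i == k.-1, nth 0 s i.+1 == k.-1,
     nth 0 t i == k & nth 0 t i.+1 == k]) (iota 0 (size s)).

Lemma block_moveE s t : block_move1 k s t = bmv s t.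
Proof.
rewrite /block_move1 /bmv; case: eqP => //= _.
apply/existsP/hasP => [[i /and5P[l /forallP H a b /andP[c d]]]|[i]].
  exists (val i); first by rewrite mem_iota /=.
  rewrite l a b c d !andbT /=; apply/allP => j; rewrite mem_iota => /andP[_ lj].
  exact: (H (Ordinal lj)).
rewrite mem_iota /= => li /and5P[l /allP H a b /andP[c d]].
exists (Ordinal li); rewrite /= l a b c d !andbT /=; apply/forallP => j.
by have := H (val j); rewrite mem_iota /=; apply.
Qed.

Lemma all_nth_eq s t : size s = size t ->
  all (fun j => nth 0 s j == nth 0 t j) (iota 0 (size s)) = (s == t).
Proof.
move=> e; apply/allP/eqP => [H|-> //].
apply: (eq_from_nth (x0 := 0)) e _ => i li; apply/eqP/H; by rewrite mem_iota.
Qed.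

Lemma iotaS0 n : iota 1 n = [seq j.+1 | j <- iota 0 n].
Proof. by rewrite -(iotaDl 1). Qed.

Lemma lmv_cons a b s t : lmv (a :: s) (b :: t) =
  ((a == b) && lmv s t) || (lcond a b && (s == t)).
Proof.
rewrite /lmv /= eqSS iotaS0 /= has_map all_map /=.
have [e|ne] := eqVneq (size s) (size t); last first.
  by rewrite /= andbF; case: (eqVneq s t) ne => [->|]; rewrite ?eqxx ?andbF.
rewrite /= orbC; congr (_ || _).
  case: (a == b) => /=.
    by apply: eq_has => i /=; rewrite all_map; congr (_ && _); apply: eq_all => j /=; rewrite eqSS.
  by apply/negbTE/hasPn => i _ /=.
rewrite andbC -all_nth_eq //; congr (_ && _); by apply: eq_all.
Qed.

Lemma lmv_nil t : lmv [::] t = false. Proof. by rewrite /lmv andbF. Qed.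
Lemma lmv_nilr s : lmv s [::] = false.
Proof. by case: s => // a s; rewrite /lmv. Qed.

Lemma lmv_lup s t : lmv s t = lup k s t || lup k t s.
Proof.
elim: s t => [|a s IH] [|b t] //; rewrite ?lmv_nil ?lmv_nilr //.
rewrite lmv_cons IH /= /lcond.
have [->|ne] := eqVneq a b.
  rewrite (ltn_eqF (ltnSn b)) /= !andbF orbF.
  by case: (lup k s t); case: (lup k t s).
rewrite /=.
have [eb|nb] := eqVneq b a.+1.
  subst b; rewrite orbT andbT /=; have -> : (a == a.+2) = false by lia.
  rewrite /= orbF; case: (ltnP a.+1 k) => h /=; last by rewrite andbF.
  by rewrite (ltnW h) /= eq_sym.
rewrite orbF /=; case: (eqVneq a b.+1) => [ea|na]; last by rewrite /= !andbF.
subst a; rewrite /= andbT eq_sym; case: (ltnP b.+1 k) => h /=; rewrite ?(ltnW h) //.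
Qed.

Lemma bmv_nil t : bmv [::] t = false. Proof. by rewrite /bmv andbF. Qed.
Lemma bmv_nilr s : bmv s [::] = false.
Proof. by case: s => // a s; rewrite /bmv. Qed.

Lemma bmv_cons a b s t : bmv (a :: s) (b :: t) =
  ((a == b) && bmv s t) || [&& a == k.-1, b == k & blk k s t].
Proof.
rewrite /bmv /= eqSS iotaS0 /= has_map all_map /=.
case: (boolP (size s == size t)) => [e|ne]; last first.
  have hb : blk k s t = false.
    case: s t ne => [|c s] [|d t] //= ne; case: (eqVneq s t) => [est|]; last by rewrite !andbF.
    by move: ne; rewrite est eqxx.
  by rewrite /= hb !andbF.
rewrite /= orbC; congr (_ || _).
  case: (a == b) => /=.
    apply: eq_has => i /=; rewrite ltnS; case: (i.+1 < size s) => //=.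
    rewrite all_map; congr (_ && _).
  by apply: negbTE; apply/hasPn => i _ /=; rewrite andbF.
case: s t e => [|c s] [|d t] //= e.
all: rewrite ?andbF //.
rewrite iotaS0 all_map.
set A := all _ _.
have -> : A = (s == t).
  rewrite /A -all_nth_eq; last by move/eqP: e => [].
  by apply: eq_all => j.
by case: (a == k.-1); case: (b == k); case: (c == k.-1); case: (d == k); case: (s == t).
Qed.

Lemma bmv_bm s t : bmv s t = bm k s t.
Proof.
elim: s t => [|a s IH] [|b t] //; rewrite ?bmv_nil ?bmv_nilr //.
by rewrite bmv_cons IH.
Qed.

Lemma pell_adjE s t : pell_adj k s t = [&& is_pell k s, is_pell k t & up k s t || up k t s].
Proof.
rewrite /pell_adj letter_moveE !block_moveE lmv_lup !bmv_bm /up.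
by case: (lup k s t); case: (lup k t s); case: (bm k s t); case: (bm k t s).
Qed.
End Moves.

Section Count.
Variable k : nat.
Hypothesis k1 : 0 < k.

Fixpoint pells (n : nat) : seq (seq nat) := match n with
| 0 => [:: [::]]
| 1 => [seq [:: a] | a <- iota 0 k]
| (m.+1 as n1).+1 => [seq a :: w | a <- iota 0 k, w <- pells n1] ++ [seq k :: k :: w | w <- pells m]
end.

Lemma mem_allpairs_cons (L1 : seq nat) (L2 : seq (seq nat)) x :
  (x \in [seq a :: w | a <- L1, w <- L2]) = (if x is a :: w then (a \in L1) && (w \in L2) else false).
Proof.
apply/allpairsP/idP => [[[a w] /= [ha hw ->]]|]; first by rewrite ha hw.
by case: x => // a w /andP[ha hw]; exists (a, w).
Qed.

Lemma mem_cons2_map (L : seq (seq nat)) x :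
  (x \in [seq k :: k :: w | w <- L]) = (if x is a :: b :: w then [&& a == k, b == k & w \in L] else false).
Proof.
apply/mapP/idP => [[w hw ->]|]; first by rewrite !eqxx.
by case: x => [|a [|b w]] // /and3P[/eqP -> /eqP -> hw]; exists w.
Qed.

Lemma pells_ind (P : nat -> Prop) : P 0 -> P 1 -> (forall n, P n -> P n.+1 -> P n.+2) -> forall n, P n.
Proof.
move=> h0 h1 hS n; suff : P n /\ P n.+1 by case.
by elim: n => [|n [IH1 IH2]]; split => //; apply: hS.
Qed.

Lemma mem_pells n s : (s \in pells n) = is_pell k s && (size s == n).
Proof.
elim/pells_ind: n s => [| |n IH1 IH2] s.
- by case: s => [|a s]; rewrite inE //= andbF.
- apply/mapP/idP => [[a ha ->]|].
    by move: ha; rewrite mem_iota /= => ->.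
  case: s => [|a [|b s]] //=; rewrite ?andbF //.
  case: (ltnP a k) => h; first by exists a; rewrite // mem_iota. by case: eqP.
- rewrite /= mem_cat mem_allpairs_cons mem_cons2_map.
  case: s => [|a s] //; rewrite mem_iota /= IH2.
  case: (ltnP a k) => ha /=.
    by case: s => [|b [|c s]] //=; rewrite (ltn_eqF ha) /= orbF.
  have [ea|ne] := eqVneq a k; last by case: s => [|b [|c s]]; rewrite //= ?andbF (negbTE ne).
  subst a; by case: s => [|b s] //=; rewrite IH1 eqSS andbA.
Qed.

Lemma uniq_pells n : uniq (pells n).
Proof.
elim/pells_ind: n => [| |n IH1 IH2] //.
  by rewrite map_inj_uniq ?iota_uniq // => a b [].
rewrite /= cat_uniq; apply/and3P; split.
- apply: allpairs_uniq; rewrite ?iota_uniq //.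
  by move=> [a w] [b v] _ _ /= [-> ->].
- apply/hasPn => x; rewrite mem_cons2_map mem_allpairs_cons.
  by case: x => [|a [|b w]] // /and3P[/eqP -> _ _]; rewrite mem_iota ltnn.
- by rewrite map_inj_uniq // => a b [].
Qed.

Lemma size_pells n : size (pells n) = kfib k n.+1.
Proof.
elim/pells_ind: n => [| |n IH1 IH2] //=.
  by rewrite size_map size_iota muln1 addn0.
by rewrite size_cat size_allpairs size_map size_iota IH1 IH2.
Qed.

Lemma pellsSS n : pells n.+2 =
  [seq a :: w | a <- iota 0 k, w <- pells n.+1] ++ [seq k :: k :: w | w <- pells n].
Proof. by []. Qed.

Lemma sum_const_seq (T : Type) (L : seq T) c : \sum_(x <- L) c = size L * c.
Proof. by elim: L => [|x L IH]; rewrite ?big_nil ?big_cons ?IH //= mulSn. Qed.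

Definition hd1 (s : seq nat) : nat := if s is c :: _ then c == k.-1 else false.

Lemma size_ups_cons a s : size (ups k (a :: s)) =
  size (ups k s) + (a.+1 < k) + (a == k.-1) * hd1 s.
Proof.
rewrite /= !size_cat size_map -addnA; congr (_ + (_ + _)); first by case: (a.+1 < k).
by case: s => [|c r] /=; rewrite ?muln0 //; case: (a == k.-1); case: (c == k.-1).
Qed.

Definition G n := \sum_(s <- pells n) size (ups k s).
Definition H n := \sum_(s <- pells n) hd1 s.

Lemma sum_iota_k (F : nat -> nat) : \sum_(a <- iota 0 k) F a = \sum_(a <- iota 0 k.-1) F a + F k.-1.
Proof.
case: k k1 => // k' _; rewrite [k'.+1.-1]/= -[k'.+1]addn1 iotaD big_cat big_seq1 //.
Qed.

Lemma H_S n : H n.+1 = kfib k n.+1.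
Proof.
case: n => [|n].
  rewrite /H /= big_map sum_iota_k /hd1 /= eqxx big_seq_cond big1 // => a.
  rewrite andbT mem_iota /= => ha. by rewrite (ltn_eqF ha).
rewrite /H pellsSS big_cat big_map big_allpairs_dep /hd1.
have -> : (k == k.-1) = false by case: k k1 => // k' _; lia.
rewrite big1_eq Monoid.mulm1.
under eq_bigr => a _ do rewrite sum_const_seq.
rewrite sum_iota_k eqxx muln1 size_pells.
rewrite big_seq_cond big1 ?add0n // => a.
by rewrite andbT mem_iota /= => ha; rewrite (ltn_eqF ha) muln0.
Qed.

Lemma G0 : G 0 = 0. Proof. by rewrite /G big_seq1. Qed.
Lemma G1 : G 1 = k.-1.
Proof.
rewrite /G /= big_map sum_iota_k size_ups_cons /= muln0 (prednK k1) ltnn !addn0.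
rewrite big_seq_cond (eq_bigr (fun _ => 1)); last first.
  move=> a; rewrite andbT mem_iota /= => ha.
  by rewrite -(prednK k1) ltnS ha.
by rewrite -big_seq_cond sum_const_seq size_iota muln1.
Qed.

Lemma G_SS n : G n.+2 = k * G n.+1 + G n + k.-1 * kfib k n.+2 + kfib k n.+1.
Proof.
have kk : (k == k.-1) = false by case: k k1 => // k' _; lia.
have kS : (k.+1 < k) = false by rewrite ltnNge leqnSn.
have HS := H_S n. have sP := size_pells n.+1.
rewrite /G pellsSS big_cat big_map big_allpairs_dep.
rewrite /H in HS.
set F2 := kfib k n.+2 in sP *. set F1 := kfib k n.+1 in HS *.
set P1 := pells n.+1 in HS sP *. set P0 := pells n.
rewrite (eq_bigr (fun w => size (ups k w))); last first.
  by move=> w _; rewrite !size_ups_cons kk kS !mul0n !addn0.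
under eq_bigr => a _ do (under eq_bigr => w _ do rewrite size_ups_cons; rewrite !big_split /=).
rewrite !big_split /= sum_const_seq size_iota.
have e2 : \sum_(i <- iota 0 k) \sum_(i0 <- P1) (i.+1 < k) = k.-1 * F2.
  under eq_bigr => a _ do rewrite sum_const_seq.
  rewrite sum_iota_k (prednK k1) ltnn muln0 addn0 sP.
  rewrite big_seq_cond (eq_bigr (fun _ => F2)); last first.
    move=> a; rewrite andbT mem_iota /= => ha.
    by rewrite -(prednK k1) ltnS ha muln1.
  by rewrite -big_seq_cond sum_const_seq size_iota.
have e3 : \sum_(i <- iota 0 k) \sum_(i0 <- P1) (i == k.-1) * hd1 i0 = F1.
  under eq_bigr => a _ do rewrite -big_distrr /=.
  rewrite HS sum_iota_k eqxx mul1n.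
  rewrite big_seq_cond big1 ?add0n // => a.
  by rewrite andbT mem_iota /= => ha; rewrite (ltn_eqF ha) mul0n.
rewrite e2 e3; lia.
Qed.
End Count.

Lemma kfibSS k n : kfib k n.+2 = k * kfib k n.+1 + kfib k n.
Proof. by case: n. Qed.

Lemma kfib_mono k n : 0 < k -> kfib k n.+1 <= kfib k n.+2.
Proof. move=> k1; rewrite kfibSS; nia. Qed.

Definition conv (a b : nat -> nat) n := \sum_(0 <= i < n.+1) a i * b (n - i).

Lemma conv_rec (k : nat) (a b : nat -> nat) n :
  (forall m, b m.+2 = k * b m.+1 + b m) ->
  conv a b n.+2 + k * (a n.+1 * b 0) =
  a n.+2 * b 0 + a n.+1 * b 1 + k * conv a b n.+1 + conv a b n.
Proof.
move=> hb; rewrite /conv.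
rewrite big_nat_recr //= big_nat_recr //= subnn.
rewrite [X in _ = _ + _ + k * X + _]big_nat_recr //= subnn.
have -> : n.+2 - n.+1 = 1 by rewrite subSn // subnn.
rewrite (eq_big_nat _ _ (F2 := fun i => k * (a i * b (n.+1 - i)) + a i * b (n - i))); last first.
  move=> i /andP[_ hi]; have e1 : n.+2 - i = (n - i).+2 by lia.
  have e2 : n.+1 - i = (n - i).+1 by lia. rewrite e1 e2 hb; nia.
rewrite big_split /= -big_distrr /=.
lia.
Qed.

Lemma pell_all k s : is_pell k s -> all (fun x => x < k.+1) s.
Proof.
move: {2}(size s) (leqnn (size s)) => m; elim: m s => [|m IH] [|a s] //= hs.
case: (ltnP a k) => ha.
  by move=> /(IH s) -> //; rewrite andbT ltnS ltnW.
case: eqP => // ->; case: s hs => [|b s] //= hs /andP[/eqP -> h].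
by rewrite ltnSn /= (IH s) //; lia.
Qed.

Section Main.
Variables k n : nat.
Hypothesis k1 : 0 < k.

Definition T := (n.-tuple 'I_k.+1)%type.
Definition w (x : T) := pell_word x.

Lemma w_inj : injective w.
Proof. by move=> x y /(inj_map val_inj) /val_inj. Qed.

Definition UP : {set T * T} :=
  [set p | [&& is_pell k (w p.1), is_pell k (w p.2) & up k (w p.1) (w p.2)]].

Lemma edges_eq : pell_edges k n = [set [set p.1; p.2] | p in UP].
Proof.
apply/setP => E; apply/imset2P/imsetP.
  case=> x y px hy ->; move: px hy; rewrite !inE => px /andP[py].
  rewrite pell_adjE // => /and3P[_ _ /orP[h|h]].
    by exists (x, y) => //; rewrite inE /= px py.
  by exists (y, x); [rewrite inE /= px py | rewrite setUC].
case=> [[x y]]; rewrite inE /= => /and3P[px py h] ->.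
apply: (@Imset2spec _ _ _ _ _ _ _ x y) => //; first by rewrite inE.
by rewrite !inE py /= pell_adjE // px py h.
Qed.

Lemma card_edges : #|pell_edges k n| = #|UP|.
Proof.
rewrite edges_eq card_in_imset // => [[x y] [x' y']]; rewrite !inE /=.
move=> /and3P[_ _ h] /and3P[_ _ h'] e.
have : x \in [set x'; y'] by rewrite -e !inE eqxx.
have : y \in [set x'; y'] by rewrite -e !inE eqxx orbT.
rewrite !inE => /orP[/eqP ey|/eqP ey] /orP[/eqP ex|/eqP ex]; subst.
- by rewrite up_irr in h.
- by move: h' (up_asym k1 h) => ->.
- by [].
- by rewrite up_irr in h.
Qed.

Definition mkt (s : seq nat) : T := insubd (nseq_tuple n (@ord0 k)) (map (@inord k) s).

Lemma mktK s : size s = n -> all (fun x => x < k.+1) s -> w (mkt s) = s.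
Proof.
move=> hs ha; rewrite /w /pell_word /mkt insubdK; last by rewrite unfold_in /= size_map hs.
rewrite -map_comp; apply: map_id_in => x xs /=; rewrite inordK //.
exact: (allP ha).
Qed.

Definition L := [seq (s, t) | s <- pells k n, t <- ups k s].

Lemma card_UP : #|UP| = G k n.
Proof.
have -> : G k n = size L.
  by rewrite /L size_allpairs_dep sumnE /G big_map.
rewrite cardE -(size_map (fun p => (w p.1, w p.2))).
apply: perm_size; apply: uniq_perm.
- rewrite map_inj_uniq ?enum_uniq // => [[x y] [x' y']] /= [] /w_inj -> /w_inj -> //.
- apply: allpairs_uniq_dep.
  + exact: uniq_pells.
  + move=> s _; exact: uniq_ups.
  + by move=> [x1 y1] [x2 y2] _ _ /= [-> ->].
move=> [s t]; apply/mapP/allpairsPdep.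
  case=> [[x y]]; rewrite mem_enum inE /= => /and3P[px py h] [-> ->].
  exists (w x), (w y); split => //.
    by rewrite mem_pells px /w /pell_word size_map size_tuple eqxx.
  by rewrite mem_ups.
case=> s' [t'] [hs ht [-> ->]].
move: hs; rewrite mem_pells => /andP[ps /eqP ss].
move: ht; rewrite mem_ups => h.
have pt := up_pell k1 h ps.
have st : size t' = n by rewrite -(up_size h).
exists (mkt s', mkt t'); last by rewrite /= !mktK // pell_all.
by rewrite mem_enum inE /= !mktK ?pell_all // ps pt h.
Qed.
End Main.

Theorem proposition3p2 (k n : nat) : 2 <= k ->
  #|pell_edges k n| =
  \sum_(0 <= i < n.+1) kfib k i * (kfib k (n - i).+2 - kfib k (n - i).+1).
Proof.
move=> k2; have k1 : 0 < k by lia.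
rewrite card_edges // card_UP //.
change (G k n = conv (kfib k) (fun m => kfib k m.+2 - kfib k m.+1) n).
set b := fun m => _.
have bE : forall m, b m = k.-1 * kfib k m.+1 + kfib k m.
  move=> m; rewrite /b kfibSS; case: k k1 {k2 b} => // k' _ /=; lia.
have hb : forall m, b m.+2 = k * b m.+1 + b m.
  move=> m; rewrite !bE (kfibSS k m.+1) (kfibSS k m).
  case: k k1 {k2 b bE} => // k' _ /=; nia.
elim/pells_ind: n => [| |n IH1 IH2].
- by rewrite G0 // /conv big_nat1.
- rewrite G1 // /conv big_nat_recr //= big_nat1 /= mul0n add0n mul1n.
  by rewrite bE /= muln1 addn0.
- have := conv_rec (kfib k) n hb; rewrite -IH1 -IH2 G_SS // !bE.
  have f0 : kfib k 0 = 0 by [].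
  have f1 : kfib k 1 = 1 by [].
  have f2 : kfib k 2 = k by rewrite kfibSS f1 f0 muln1 addn0.
  rewrite f0 f1 f2.
  move: (conv (kfib k) b n.+2) (kfib k n.+2) (kfib k n.+1) (G k n.+1) (G k n) => C x y g1 g0.
  clear b bE hb IH1 IH2 f0 f1 f2.
  case: k k1 k2 => // k' _ _ /=; nia.
Qed.
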